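(* Every $L\in\mathcal L(C_6)$ which is an interval (i.e. of the form $[a,b]$ with integers $a\le b$) lies in $\mathcal L(C_2^5)$.
   Context: $C_n$ denotes a cyclic group of order $n$ and $C_2^r$ an elementary abelian $2$-group of rank $r$; $[a,b]=\{x\in\mathbb Z:a\le x\le b\}$. For a subset $G_0$ of a finite abelian group $G$, a sequence over $G_0$ is an element of the free abelian monoid $\mathcal F(G_0)$ with basis $G_0$ (a finite unordered list of elements of $G_0$, repetitions allowed). $\mathcal B(G_0)$ is the monoid of zero-sum sequences over $G_0$ (including the empty sequence). An atom is a minimal zero-sum sequence, i.e. a nonempty zero-sum sequence that is not a product of two nonempty zero-sum sequences. For $B\in\mathcal B(G_0)$, $\mathsf L(B)=\{k\in\mathbb N_0: B \text{ is a product of } k \text{ atoms}\}$, and $\mathcal L(G_0)=\{\mathsf L(B):B\in\mathcal B(G_0)\}$; $\mathcal L(G)$ is the case $G_0=G$. *)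

(* Defs.v *)
From HB Require Import structures.
From mathcomp Require Import all_boot all_algebra.
Set Implicit Arguments. Unset Strict Implicit. Unset Printing Implicit Defensive.
Import GRing.Theory.
Local Open Scope ring_scope.

(* A sequence over a finite abelian group G (element of the free abelian
   monoid F(G)) is represented by its multiplicity function G -> nat. *)
Definition fseq (G : finZmodType) := {ffun G -> nat}.

Section ZS.
Variable G : finZmodType.

Definition fseq_mul (S T : fseq G) : fseq G := [ffun g => (S g + T g)%N].
Definition fseq_one : fseq G := [ffun _ => 0%N].
Definition fseq_prod (s : seq (fseq G)) : fseq G :=
  [ffun g => (\sum_(A <- s) A g)%N].

Definition fseq_len (S : fseq G) : nat := (\sum_(g : G) S g)%N.
Definition sigma (S : fseq G) : G := \sum_(g : G) g *+ S g.

Definition zero_sum (S : fseq G) : bool := sigma S == 0.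

Definition atom (A : fseq G) : Prop :=
  [/\ zero_sum A, A != fseq_one &
      forall U V : fseq G, zero_sum U -> zero_sum V -> A = fseq_mul U V ->
        U = fseq_one \/ V = fseq_one].

Definition in_length_set (B : fseq G) (k : nat) : Prop :=
  exists s : seq (fseq G), [/\ size s = k, (forall A, A \in s -> atom A) &
                                fseq_prod s = B].

Definition in_system_of_sets_of_lengths (L : nat -> Prop) : Prop :=
  exists B : fseq G, zero_sum B /\ forall k, L k <-> in_length_set B k.
End ZS.

(* Main.v *)
Require Import Defs.
From mathcomp Require Import all_boot all_algebra zify.
Set Implicit Arguments. Unset Strict Implicit. Unset Printing Implicit Defensive.
Import GRing.Theory.

Close Scope ring_scope.
Open Scope ring_scope.

Definition ind (G : finZmodType) (s : seq G) : fseq G := [ffun g => count_mem g s].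

Lemma mulE (G : finZmodType) (U V : fseq G) g : fseq_mul U V g = (U g + V g)%N.
Proof. by rewrite ffunE. Qed.

Lemma oneE (G : finZmodType) g : (fseq_one G) g = 0%N.
Proof. by rewrite ffunE. Qed.

Lemma sigma_mul (G : finZmodType) (U V : fseq G) : sigma (fseq_mul U V) = sigma U + sigma V.
Proof. by rewrite /sigma -big_split; apply: eq_bigr => g _; rewrite ffunE mulrnDr. Qed.

Lemma len_mul (G : finZmodType) (U V : fseq G) :
  fseq_len (fseq_mul U V) = (fseq_len U + fseq_len V)%N.
Proof. by rewrite /fseq_len -big_split; apply: eq_bigr => g _; rewrite ffunE. Qed.

Lemma sigma_one (G : finZmodType) : sigma (fseq_one G) = 0.
Proof. by rewrite /sigma big1 // => g _; rewrite ffunE. Qed.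

Lemma len_one (G : finZmodType) : fseq_len (fseq_one G) = 0%N.
Proof. by rewrite /fseq_len big1 // => g _; rewrite ffunE. Qed.

Lemma mul1f (G : finZmodType) (U : fseq G) : fseq_mul (fseq_one G) U = U.
Proof. by apply/ffunP => g; rewrite !ffunE. Qed.

Lemma mulf1 (G : finZmodType) (U : fseq G) : fseq_mul U (fseq_one G) = U.
Proof. by apply/ffunP => g; rewrite !ffunE addn0. Qed.

Lemma prod_nil (G : finZmodType) : fseq_prod [::] = fseq_one G.
Proof. by apply/ffunP => g; rewrite !ffunE big_nil. Qed.

Lemma prod_cons (G : finZmodType) (A : fseq G) s :
  fseq_prod (A :: s) = fseq_mul A (fseq_prod s).
Proof. by apply/ffunP => g; rewrite !ffunE big_cons. Qed.

Lemma prodE (G : finZmodType) (s : seq (fseq G)) g : fseq_prod s g = (\sum_(A <- s) A g)%N.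
Proof. by rewrite ffunE. Qed.

Lemma len0 (G : finZmodType) (U : fseq G) : fseq_len U = 0%N -> U = fseq_one G.
Proof.
move=> H; apply/ffunP => g; rewrite ffunE.
move/eqP: H; rewrite /fseq_len sum_nat_eq0 => /forallP /(_ g) /implyP /(_ isT).
by move/eqP.
Qed.

Lemma ind_nil (G : finZmodType) : ind [::] = fseq_one G.
Proof. by apply/ffunP => g; rewrite !ffunE. Qed.

Lemma ind_cat (G : finZmodType) (s t : seq G) : ind (s ++ t) = fseq_mul (ind s) (ind t).
Proof. by apply/ffunP => g; rewrite !ffunE count_cat. Qed.

Lemma ind_perm (G : finZmodType) (s t : seq G) : perm_eq s t -> ind s = ind t.
Proof. by move=> /permP H; apply/ffunP => g; rewrite !ffunE H. Qed.

Lemma sigma_ind1 (G : finZmodType) (x : G) : sigma (ind [:: x]) = x.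
Proof.
rewrite /sigma (bigD1 x) //= big1 ?addr0; first by rewrite ffunE /= eqxx.
by move=> g /negPf gx; rewrite ffunE /= eq_sym gx.
Qed.

Lemma len_ind1 (G : finZmodType) (x : G) : fseq_len (ind [:: x]) = 1%N.
Proof.
rewrite /fseq_len (bigD1 x) //= big1 ?addn0; first by rewrite ffunE /= eqxx.
by move=> g /negPf gx; rewrite ffunE /= eq_sym gx.
Qed.

Lemma sigma_ind (G : finZmodType) (s : seq G) : sigma (ind s) = \sum_(x <- s) x.
Proof.
elim: s => [|x s IH]; first by rewrite ind_nil sigma_one big_nil.
by rewrite -cat1s ind_cat sigma_mul IH sigma_ind1 big_cons.
Qed.

Lemma len_ind (G : finZmodType) (s : seq G) : fseq_len (ind s) = size s.
Proof.
elim: s => [|x s IH]; first by rewrite ind_nil len_one.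
by rewrite -cat1s ind_cat len_mul IH len_ind1.
Qed.

Lemma prod_map_ind (G : finZmodType) (F : seq (seq G)) :
  fseq_prod (map (@ind G) F) = ind (flatten F).
Proof.
elim: F => [|s F IH]; first by rewrite prod_nil ind_nil.
by rewrite /= prod_cons IH ind_cat.
Qed.

Lemma sigma_prod (G : finZmodType) (s : seq (fseq G)) :
  (forall A, A \in s -> zero_sum A) -> zero_sum (fseq_prod s).
Proof.
elim: s => [|A s IH] H; first by rewrite prod_nil /zero_sum sigma_one.
rewrite prod_cons /zero_sum sigma_mul.
have /eqP -> := H A (mem_head _ _).
rewrite add0r; apply: IH => B Bs; apply: H; by rewrite in_cons Bs orbT.
Qed.

Lemma len_prod (G : finZmodType) (s : seq (fseq G)) :
  fseq_len (fseq_prod s) = (\sum_(A <- s) fseq_len A)%N.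
Proof.
elim: s => [|A s IH]; first by rewrite prod_nil len_one big_nil.
by rewrite prod_cons len_mul IH big_cons.
Qed.

Definition fdiff (G : finZmodType) (A U : fseq G) : fseq G := [ffun g => A g - U g]%N.

Lemma fdiffK (G : finZmodType) (A U : fseq G) :
  (forall g, U g <= A g)%N -> A = fseq_mul U (fdiff A U).
Proof. by move=> H; apply/ffunP => g; rewrite !ffunE subnKC. Qed.

Lemma atom_sub (G : finZmodType) (A U : fseq G) :
  atom A -> (forall g, U g <= A g)%N -> zero_sum U -> U = fseq_one G \/ U = A.
Proof.
case=> zA nA min le zU.
have AUV := fdiffK le.
have zV : zero_sum (fdiff A U).
  move: zA zU; rewrite /zero_sum {1}AUV sigma_mul => /eqP H /eqP H2.
  by rewrite H2 add0r in H; rewrite H.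
case: (min _ _ zU zV AUV) => [->|V1]; [by left|right].
by rewrite AUV V1 mulf1.
Qed.

Lemma sub_len_eq (G : finZmodType) (A U : fseq G) :
  (forall g, U g <= A g)%N -> fseq_len U = fseq_len A -> U = A.
Proof.
move=> le hl; have AUV := fdiffK le.
have : fseq_len (fdiff A U) = 0%N.
  by move: hl; rewrite {1}AUV len_mul => /eqP; rewrite -{1}[fseq_len U]addn0 eqn_add2l => /eqP <-.
by move/len0 => V1; rewrite AUV V1 mulf1.
Qed.

Lemma len1_ind (G : finZmodType) (V : fseq G) : fseq_len V = 1%N -> exists h, V = ind [:: h].
Proof.
move=> h1.
have [h Vh] : exists h, (0 < V h)%N.
  apply/existsP; apply: contraT; rewrite negb_exists => /forallP H.
  move: h1; rewrite /fseq_len big1 // => g _.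
  by move: (H g); rewrite lt0n negbK => /eqP.
exists h; symmetry; apply: sub_len_eq; last by rewrite len_ind1 h1.
by move=> g; rewrite ffunE /=; case: eqP => // <-; rewrite addn0.
Qed.

Lemma atom_len_pos (G : finZmodType) (A : fseq G) : atom A -> (0 < fseq_len A)%N.
Proof.
case=> _ nA _; rewrite lt0n; apply: contra nA => /eqP /len0 ->; exact: eqxx.
Qed.

Lemma atom_cases (G : finZmodType) (A : fseq G) :
  atom A -> A = ind [:: 0] \/ (A 0 = 0%N /\ (2 <= fseq_len A)%N).
Proof.
move=> aA.
case: (posnP (A 0)) => [A0|A0].
  right; split => //.
  have := atom_len_pos aA; rewrite leq_eqVlt => /orP [/eqP h1|] //.
  have [h Ah] := len1_ind (esym h1).
  case: aA => zA _ _; move: zA; rewrite Ah /zero_sum sigma_ind1 => /eqP h0.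
  by move: A0; rewrite Ah ffunE h0 /= eqxx.
left; symmetry.
have zU : zero_sum (ind [:: (0 : G)]) by rewrite /zero_sum sigma_ind1.
have le : forall g, (ind [:: (0:G)%R] g <= A g)%N.
  by move=> g; rewrite ffunE /=; case: eqP => // <-.
case: (atom_sub aA le zU) => [e|//].
by have := congr1 (fun f : fseq G => f 0) e; rewrite !ffunE /= eqxx.
Qed.

Lemma sub_mask (G : finZmodType) (s : seq G) (U : fseq G) :
  (forall g, U g <= count_mem g s)%N -> exists m, size m = size s /\ U = ind (mask m s).
Proof.
elim: s U => [|x s IH] U le.
  exists [::]; split => //; rewrite ind_nil; apply/ffunP => g; rewrite ffunE.
  by apply/eqP; rewrite -leqn0 le.
case: (posnP (U x)) => [Ux|Ux].
  have le' : forall g, (U g <= count_mem g s)%N.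
    move=> g; have := le g; rewrite /= ; case: eqP => [<-|_]; last by rewrite add0n.
    by rewrite Ux.
  have [m [sm ->]] := IH U le'.
  by exists (false :: m); rewrite /= sm.
pose U' : fseq G := [ffun g => U g - (x == g)]%N.
have le' : forall g, (U' g <= count_mem g s)%N.
  by move=> g; rewrite ffunE leq_subLR; exact: le g.
have [m [sm e]] := IH U' le'.
exists (true :: m); split; first by rewrite /= sm.
apply/ffunP => g; rewrite /= ffunE /=.
have := congr1 (fun f : fseq G => f g) e; rewrite !ffunE /= => <-.
by case: eqP => [<-|_]; rewrite ?subn1 ?subn0 // add1n prednK.
Qed.

Lemma atom_ind (G : finZmodType) (s : seq G) :
  s != [::] -> \sum_(x <- s) x = 0 ->
  (forall m, size m = size s -> (0 < count id m < size s)%N -> \sum_(x <- mask m s) x != 0) ->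
  atom (ind s).
Proof.
move=> sn ss H; split.
- by rewrite /zero_sum sigma_ind ss.
- apply/eqP => e; move: (congr1 (@fseq_len G) e); rewrite len_ind len_one.
  by move/eqP; rewrite size_eq0 (negPf sn).
- move=> U V zU zV e.
  have le : forall g, (U g <= count_mem g s)%N.
    by move=> g; have := congr1 (fun f : fseq G => f g) e; rewrite !ffunE => ->; apply: leq_addr.
  have [m [sm eU]] := sub_mask le.
  case: (posnP (count id m)) => [c0|cp].
    left; rewrite eU; suff -> : mask m s = [::] by rewrite ind_nil.
    by apply/eqP; rewrite -size_eq0 size_mask ?sm // c0.
  case: (ltnP (count id m) (size s)) => [cl|cg].
    have := H m sm; rewrite cp cl => /(_ isT); move: zU; rewrite /zero_sum eU sigma_ind.
    by move=> /eqP ->; rewrite eqxx.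
  right; apply: len0.
  have h1 : fseq_len U = size s.
    rewrite eU len_ind size_mask ?sm //; apply/eqP; rewrite eqn_leq cg andbT.
    by rewrite -sm count_size.
  have h2 := congr1 (@fseq_len G) e; rewrite len_ind len_mul in h2.
  by apply/eqP; rewrite -(eqn_add2l (fseq_len U)) addn0 -h2 h1.
Qed.

Lemma fact_bound (G : finZmodType) (s : seq (fseq G)) :
  (forall A : fseq G, atom A -> fseq_len A <= 6)%N ->
  (forall A, A \in s -> atom A) ->
  exists p N, [/\ size s = (fseq_prod s 0%R + p)%N, fseq_len (fseq_prod s) = (fseq_prod s 0%R + N)%N,
      (2 * p <= N <= 6 * p)%N,
      ((2 * p)%N = N -> forall A, A \in s -> A = ind [:: 0] \/ fseq_len A = 2%N) &
      ((6 * p)%N = N -> forall A, A \in s -> A = ind [:: 0] \/ fseq_len A = 6%N)].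
Proof.
move=> D; elim: s => [|A s IH] H.
  exists 0%N, 0%N; rewrite prod_nil len_one ffunE; split => //.
have [p [N [e1 e2 e3 e4 e5]]] : exists p N, [/\ size s = (fseq_prod s 0%R + p)%N, fseq_len (fseq_prod s) = (fseq_prod s 0%R + N)%N,
      (2 * p <= N <= 6 * p)%N,
      ((2 * p)%N = N -> forall A, A \in s -> A = ind [:: 0] \/ fseq_len A = 2%N) &
      ((6 * p)%N = N -> forall A, A \in s -> A = ind [:: 0] \/ fseq_len A = 6%N)].
  by apply: IH => B Bs; apply: H; rewrite in_cons Bs orbT.
have aA := H A (mem_head _ _).
have DA := D A aA.
rewrite prod_cons len_mul mulE.
case: (atom_cases aA) => [eA|[A0 A2]].
  exists p, N; rewrite eA len_ind1 ffunE /= eqxx; split => //=.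
  - by rewrite e1.
  - by rewrite e2 addnA.
  - move=> h B; rewrite in_cons => /orP [/eqP ->|Bs]; [by left|exact: e4].
  - move=> h B; rewrite in_cons => /orP [/eqP ->|Bs]; [by left|exact: e5].
exists p.+1, (fseq_len A + N)%N; rewrite A0 add0n; move/andP: e3 => [l1 l2]; split => //=.
- by rewrite e1 addnS.
- by rewrite e2 addnCA.
- apply/andP; split; lia.
- move=> h B; rewrite in_cons => /orP [/eqP ->|Bs]; first by right; lia.
  by apply: e4 => //; lia.
- move=> h B; rewrite in_cons => /orP [/eqP ->|Bs]; first by right; lia.
  by apply: e5 => //; lia.
Qed.

Close Scope ring_scope.
Open Scope ring_scope.

Notation G25 := ('rV['Z_2]_5).

Lemma z2add (x : 'Z_2) : x + x = 0.
Proof. apply/val_inj; case: x => [[|[|n]]] //=. Qed.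

Lemma addxx (x : G25) : x + x = 0.
Proof. by apply/rowP => i; rewrite !mxE z2add. Qed.

Lemma card_G25 : #|{: G25}| = 32%N.
Proof. by rewrite card_mx card_ord. Qed.

Lemma sigma_set (Z : {set G25}) :
  sigma [ffun g => ((g \in Z) : nat)] = \sum_(y in Z) y.
Proof.
rewrite /sigma [RHS]big_mkcond /=; apply: eq_bigr => g _; rewrite ffunE.
by case: (g \in Z); rewrite ?mulr1n ?mulr0n.
Qed.

Lemma D25 (A : fseq G25) : atom A -> (fseq_len A <= 6)%N.
Proof.
move=> aA.
case: (boolP [exists g, (2 <= A g)%N]) => [/existsP [g Ag]|].
  pose U := ind [:: g; g].
  have le : forall h, (U h <= A h)%N.
    move=> h; rewrite ffunE /=; case: eqP => [<-|_]; by rewrite ?addn0.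
  have zU : zero_sum U by rewrite /zero_sum sigma_ind big_cons big_seq1 addxx.
  case: (atom_sub aA le zU) => [e|<-]; last by rewrite len_ind.
  by have := congr1 (fun f : fseq G25 => f g) e; rewrite !ffunE /= eqxx.
rewrite negb_exists => /forallP A1.
set S := [set g | A g != 0%N].
have AS : A = [ffun g => ((g \in S) : nat)].
  apply/ffunP => g; rewrite ffunE inE; have := A1 g; rewrite -ltnNge.
  by case: (A g) => [|[|]].
have lenS : fseq_len A = #|S|.
  rewrite -sum1_card big_mkcond /fseq_len; apply: eq_bigr => g _.
  by rewrite {1}AS ffunE; case: (g \in S).
rewrite lenS; apply: contraT; rewrite -ltnNge => S7.
have [x xS] : exists x, x \in S.
  by apply/set0Pn; rewrite -card_gt0; apply: leq_trans S7.
set S' := S :\ x.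
have cS' : (6 <= #|S'|)%N by move: S7; rewrite (cardsD1 x S) xS add1n ltnS.
pose f := fun X : {set G25} => \sum_(y in X) y.
have [X [Y [XP YP XY fXY]]] : exists X Y, [/\ X \in powerset S', Y \in powerset S', X != Y & f X = f Y].
  case: (boolP [exists X in powerset S', exists Y in powerset S', (X != Y) && (f X == f Y)]).
    move=> /existsP [X /andP [XP /existsP [Y /andP [YP /andP [XY /eqP e]]]]].
    by exists X, Y.
  move=> /existsPn H.
  have inj : {in powerset S' &, injective f}.
    move=> X Y XP YP e; apply/eqP; apply: contraT => ne.
    have := H X; rewrite XP /=; move/existsPn/(_ Y); rewrite YP /= ne e eqxx.
    by [].
  have := card_in_imset inj; rewrite card_powerset => e.
  have := max_card [set f X | X in powerset S']; rewrite e card_G25.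
  have : (2 ^ 6 <= 2 ^ #|S'|)%N by rewrite leq_exp2l.
  by move=> h1 h2; have := leq_trans h1 h2.
set Z := (X :\: Y) :|: (Y :\: X).
have fZ : f Z = 0.
  have e1 : f X = \sum_(y in X :&: Y) y + \sum_(y in X :\: Y) y by rewrite /f (@big_setID _ _ _ _ X Y).
  have e2 : f Y = \sum_(y in X :&: Y) y + \sum_(y in Y :\: X) y by rewrite /f (@big_setID _ _ _ _ Y X) setIC.
  have e3 : f Z = \sum_(y in X :\: Y) y + \sum_(y in Y :\: X) y.
    rewrite /f (@big_setID _ _ _ _ Z X); congr (_ + _); apply: eq_bigl => y; rewrite /Z !inE;
    by case: (y \in X); case: (y \in Y).
  have : f X + f Y = f Z.
    rewrite e1 e2 e3 addrACA addxx add0r //.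
  by rewrite fXY addxx => <-.
have Zn : Z != set0.
  apply: contra XY => /eqP Z0; apply/eqP/setP => y.
  have : y \notin Z by rewrite Z0 inE.
  by rewrite /Z !inE; case: (y \in X); case: (y \in Y).
have ZS' : Z \subset S'.
  move: XP YP; rewrite !powersetE => XS YS.
  apply/subsetP => y; rewrite /Z inE => /orP [] /setDP [yX _];
    [exact: (subsetP XS) | exact: (subsetP YS)].
pose U : fseq G25 := [ffun g => ((g \in Z) : nat)].
have le : forall g, (U g <= A g)%N.
  move=> g; rewrite AS !ffunE; case gZ: (g \in Z) => //.
  by have := subsetP ZS' g gZ; rewrite !inE => /andP [_ ->].
have zU : zero_sum U by rewrite /zero_sum sigma_set -/(f Z) fZ.
case: (atom_sub aA le zU) => e.
  move: Zn => /set0Pn [z zZ].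
  by have := congr1 (fun f : fseq G25 => f z) e; rewrite !ffunE zZ.
have := congr1 (fun f : fseq G25 => f x) e; rewrite AS !ffunE xS.
have : x \notin Z by apply: contraL xS => /(subsetP ZS'); rewrite !inE eqxx.
by move/negPf ->.
Qed.

Lemma len2_even (A : fseq G25) : atom A -> fseq_len A = 2%N -> forall g, ~~ odd (A g).
Proof.
move=> aA l2 g; apply/negP => og.
have Ag : (0 < A g)%N by case: (A g) og.
have le : forall h, (ind [:: g] h <= A h)%N.
  by move=> h; rewrite ffunE /=; case: eqP => [<-|]; rewrite ?addn0.
have AUV := fdiffK le.
have : fseq_len (fdiff A (ind [:: g])) = 1%N.
  by move: l2; rewrite {1}AUV len_mul len_ind1 => /eqP; rewrite add1n eqSS => /eqP.
move/len1_ind => [h eh]; rewrite eh -ind_cat /= in AUV.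
case: aA => zA _ _; move: zA; rewrite AUV /zero_sum sigma_ind big_cons big_seq1 => /eqP gh.
have hg : h = g by rewrite -[h]add0r -(addxx g) -addrA gh addr0.
by move: og; rewrite AUV ffunE /= hg eqxx.
Qed.

Lemma even_prod (s : seq (fseq G25)) g : g != 0 ->
  (forall A, A \in s -> A = ind [:: 0] \/ (atom A /\ fseq_len A = 2%N)) ->
  ~~ odd (fseq_prod s g).
Proof.
move=> gn; elim: s => [|A s IH] H; first by rewrite prodE big_nil.
rewrite prodE big_cons -prodE oddD.
have -> : odd (A g) = false.
  case: (H A (mem_head _ _)) => [->|[aA l2]].
    by rewrite ffunE /= eq_sym (negPf gn).
  by apply/negbTE/len2_even.
by rewrite /= IH // => B Bs; apply: H; rewrite in_cons Bs orbT.
Qed.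

Definition bit (i c : nat) : bool := odd (c %/ 2 ^ i).
Fixpoint xorn (k a b : nat) : nat :=
  if k is k'.+1 then ((odd a (+) odd b) + 2 * xorn k' a./2 b./2)%N else 0%N.
Definition xorc := xorn 5.
Definition enc (c : nat) : G25 := \row_(i < 5) (bit i c)%:R.

Lemma xor_check : all (fun a => all (fun b => (xorc a b < 32)%N &&
   all (fun i => bit i (xorc a b) == bit i a (+) bit i b) (iota 0 5)) (iota 0 32)) (iota 0 32).
Proof. by vm_compute. Qed.

Lemma inj_check : all (fun a => all (fun b =>
   all (fun i => bit i a == bit i b) (iota 0 5) ==> (a == b)) (iota 0 32)) (iota 0 32).
Proof. by vm_compute. Qed.

Lemma xorc_lt a b : (a < 32)%N -> (b < 32)%N -> (xorc a b < 32)%N.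
Proof.
move=> ha hb; move/allP: xor_check => /(_ a); rewrite mem_iota ha => /(_ isT).
by move/allP => /(_ b); rewrite mem_iota hb => /(_ isT) /andP [].
Qed.

Lemma z2bool (x y : bool) : (x%:R : 'Z_2) = y%:R -> x = y.
Proof. by case: x; case: y => // /(congr1 val). Qed.

Lemma enc_xor a b : (a < 32)%N -> (b < 32)%N -> enc (xorc a b) = enc a + enc b.
Proof.
move=> ha hb; apply/rowP => i; rewrite !mxE.
move/allP: xor_check => /(_ a); rewrite mem_iota ha => /(_ isT).
move/allP => /(_ b); rewrite mem_iota hb => /(_ isT) /andP [_ /allP /(_ i)].
rewrite mem_iota ltn_ord => /(_ isT) /eqP ->.
by case: (bit i a); case: (bit i b); apply/val_inj.
Qed.

Lemma enc_inj a b : (a < 32)%N -> (b < 32)%N -> enc a = enc b -> a = b.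
Proof.
move=> ha hb e.
move/allP: inj_check => /(_ a); rewrite mem_iota ha => /(_ isT).
move/allP => /(_ b); rewrite mem_iota hb => /(_ isT) /implyP H; apply/eqP; apply: H.
apply/allP => i; rewrite mem_iota /= => hi.
have := congr1 (fun r : G25 => r 0 (Ordinal hi)) e; rewrite !mxE /=.
by move/z2bool => ->.
Qed.

Lemma enc0 : enc 0 = 0.
Proof. by apply/rowP => i; rewrite !mxE /bit div0n. Qed.

Lemma enc_nz c : (0 < c < 32)%N -> enc c != 0.
Proof.
move=> /andP [c0 c32]; apply/eqP; rewrite -enc0 => /enc_inj.
by move=> /(_ c32 isT) e; move: c0; rewrite e.
Qed.

Lemma sum_enc (t : seq nat) : all (fun c => c < 32)%N t ->
  \sum_(x <- map enc t) x = enc (foldr xorc 0%N t) /\ (foldr xorc 0%N t < 32)%N.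
Proof.
elim: t => [|c t IH] /=; first by rewrite big_nil enc0.
move=> /andP [hc ht]; have [e1 e2] := IH ht.
by rewrite big_cons e1 enc_xor // xorc_lt.
Qed.

Fixpoint masks (n : nat) : seq (seq bool) :=
  if n is n'.+1 then [seq true :: m | m <- masks n'] ++ [seq false :: m | m <- masks n']
  else [:: [::]].

Lemma mem_masks m : m \in masks (size m).
Proof.
elim: m => [|b m IH] //=; rewrite mem_cat.
by case: b; apply/orP; [left|right]; apply/mapP; exists m.
Qed.

Definition goodc (cs : seq nat) : bool :=
  [&& cs != [::], all (fun c => c < 32)%N cs, foldr xorc 0%N cs == 0%N &
     all (fun m => (0 < count id m < size cs)%N ==> (foldr xorc 0%N (mask m cs) != 0%N))
       (masks (size cs))].

Lemma goodc_atom cs : goodc cs -> atom (ind (map enc cs)).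
Proof.
case/and4P => cn call cz cm.
apply: atom_ind.
- by case: cs cn {call cz cm}.
- by have [-> _] := sum_enc call; rewrite (eqP cz) enc0.
- move=> m; rewrite size_map => sm cnt.
  rewrite -map_mask.
  have call' : all (fun c => c < 32)%N (mask m cs).
    by apply/allP => c /mem_mask /(allP call).
  have [-> lt] := sum_enc call'.
  have := allP cm m; rewrite -sm mem_masks => /(_ isT); rewrite sm cnt /= => nz.
  by apply: enc_nz; rewrite lt andbT lt0n.
Qed.

Definition codefact (T : seq nat) (p : nat) :=
  exists F : seq (seq nat), [/\ size F = p, all goodc F & perm_eq (flatten F) T].

Lemma codefact_len T p : codefact T p -> in_length_set (ind (map enc T)) p.
Proof.
move=> [F [sF gF pF]].
exists (map (fun cs => ind (map enc cs)) F); split.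
- by rewrite size_map.
- by move=> A /mapP [cs csF ->]; apply: goodc_atom; apply: (allP gF).
- have -> : map (fun cs => ind (map enc cs)) F = map (@ind G25) (map (map enc) F).
    by rewrite -map_comp.
  rewrite prod_map_ind.
  by apply: ind_perm; rewrite -map_flatten; apply: perm_map.
Qed.

Lemma codefact_cat T1 T2 p1 p2 : codefact T1 p1 -> codefact T2 p2 -> codefact (T1 ++ T2) (p1 + p2).
Proof.
move=> [F1 [s1 g1 q1]] [F2 [s2 g2 q2]]; exists (F1 ++ F2); split.
- by rewrite size_cat s1 s2.
- by rewrite all_cat g1 g2.
- by rewrite flatten_cat perm_cat.
Qed.

Lemma codefact_perm T T' p : perm_eq T T' -> codefact T p -> codefact T' p.
Proof.
move=> e [F [s1 g1 q1]]; exists F; split => //; exact: perm_trans q1 e.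
Qed.

Lemma codefact_zeros v : codefact (nseq v 0%N) v.
Proof.
exists (nseq v [:: 0%N]); split.
- by rewrite size_nseq.
- by apply/allP => x /nseqP [-> _].
- by elim: v => //= v IH; rewrite perm_cons.
Qed.

Lemma count_enc (T : seq nat) c : all (fun c => c < 32)%N T -> (c < 32)%N ->
  count_mem (enc c) (map enc T) = count_mem c T.
Proof.
move=> hT hc; rewrite count_map; apply: eq_in_count => x xT /=.
apply/eqP/eqP => [|->] //; apply: enc_inj => //; exact: (allP hT).
Qed.

Lemma realize (Tz : seq nat) (v lo hi : nat) :
  all (fun c => 0 < c < 32)%N Tz ->
  (lo <= hi)%N ->
  (forall p, size Tz <= 6 * p -> lo <= p)%N ->
  (forall p, 2 * p < size Tz -> p <= hi)%N ->
  ((exists c, odd (count_mem c Tz)) \/ (forall p, 2 * p = size Tz -> p <= hi)%N) ->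
  (forall p, lo <= p <= hi -> codefact Tz p)%N ->
  @in_system_of_sets_of_lengths G25 (fun k => v + lo <= k <= v + hi)%N.
Proof.
move=> hTz lohi HL HU HP HC.
set T := nseq v 0%N ++ Tz.
have hT : all (fun c => c < 32)%N T.
  rewrite all_cat; apply/andP; split; first by apply/allP => x /nseqP [-> _].
  by apply/allP => x /(allP hTz) /andP [].
set B := ind (map enc T).
have CF : forall k, (v + lo <= k <= v + hi)%N -> in_length_set B k.
  move=> k hk; apply: codefact_len.
  have -> : k = (v + (k - v))%N by lia.
  apply: codefact_cat; first exact: codefact_zeros.
  by apply: HC; lia.
have zB : zero_sum B.
  have [s [_ sa ps]] := CF (v + lo)%N ltac:(lia).
  by rewrite -ps; apply: sigma_prod => A /sa [].
exists B; split => // k; split; first exact: CF.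
move=> [s [sk sa ps]].
have [p [N [e1 e2 e3 e4 _]]] := @fact_bound G25 s D25 sa.
rewrite ps in e1 e2.
have B0 : B 0 = v.
  rewrite ffunE -enc0 count_enc // /T count_cat count_nseq /= mul1n.
  rewrite (@eq_in_count _ _ pred0) ?count_pred0 ?addn0 //.
  by move=> x /(allP hTz) /andP [x0 _] /=; case: x x0.
have lB : fseq_len B = (v + size Tz)%N by rewrite len_ind size_map size_cat size_nseq.
rewrite B0 in e1 e2; rewrite lB in e2.
have NT : N = size Tz by lia.
rewrite -sk e1; subst N.
have := HL p; move/andP: e3 => [l1 l2] /(_ l2) hl.
case: (ltnP (2 * p) (size Tz)) => [lt|ge].
  by have := HU p lt; lia.
have eq : (2 * p)%N = size Tz by lia.
case: HP => [[c oc]|H]; last by have := H p eq; lia.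
exfalso.
have cT : c \in Tz by rewrite -has_pred1 has_count; case: (count _ _) oc.
have /andP [c0 c32] := allP hTz c cT.
have gn := enc_nz (introT andP (conj c0 c32)).
have hs : forall A, A \in s -> A = ind [:: 0] \/ (atom A /\ fseq_len A = 2%N).
  by move=> A As; case: (e4 eq A As) => [->|l]; [left|right; split => //; exact: sa].
have := even_prod gn hs.
by rewrite ps ffunE count_enc // count_cat count_nseq /= eq_sym (negbTE (lt0n_neq0 c0)) mul0n add0n oc.
Qed.

Close Scope ring_scope.

Definition Uc : seq nat := [:: 1; 2; 4; 8; 16; 31].
Fixpoint Upow (j : nat) : seq nat := if j is j'.+1 then Uc ++ Uc ++ Upow j' else [::].

Lemma cfX F T p : size F = p -> all goodc F -> perm_eq (flatten F) T -> codefact T p.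
Proof. by move=> *; exists F. Qed.

Lemma cf_UU2 : codefact (Uc ++ Uc) 2.
Proof. by apply: (cfX (F := [:: Uc; Uc])); vm_compute. Qed.

Lemma cf_UU6 : codefact (Uc ++ Uc) 6.
Proof. by apply: (cfX (F := [seq [:: c; c] | c <- Uc])); vm_compute. Qed.

Lemma cf_Upow j t : t <= j -> codefact (Upow j) (2 * j + 4 * t).
Proof.
elim: j t => [|j IH] t ht.
  have -> : t = 0 by lia.
  by apply: (cfX (F := [::])).
have -> : Upow j.+1 = (Uc ++ Uc) ++ Upow j by rewrite -catA.
case: (ltnP t j.+1) => h.
  have -> : 2 * j.+1 + 4 * t = 2 + (2 * j + 4 * t) by lia.
  apply: codefact_cat; [exact: cf_UU2 | apply: IH; lia].
have -> : 2 * j.+1 + 4 * t = 6 + (2 * j + 4 * j) by lia.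
apply: codefact_cat; [exact: cf_UU6 | apply: IH; lia].
Qed.

Lemma size_Upow j : size (Upow j) = 12 * j.
Proof. elim: j => // j IH; rewrite (_ : Upow j.+1 = Uc ++ Uc ++ Upow j) // !size_cat IH /=; lia. Qed.

Lemma Upow_even j c : ~~ odd (count_mem c (Upow j)).
Proof.
elim: j => // j IH; rewrite (_ : Upow j.+1 = Uc ++ Uc ++ Upow j) // !count_cat oddD oddD.
by case: (odd (count_mem c Uc)); move: IH; case: (odd _).
Qed.

Lemma Upow_all j : all (fun c => 0 < c < 32) (Upow j).
Proof. by elim: j => //= j ->; rewrite andbT. Qed.

Lemma family j X l0 w : (j = 0 \/ 3 <= w) -> (forall l, l <= w -> codefact X (l0 + l)) ->
   forall p, 2 * j + l0 <= p <= 6 * j + l0 + w -> codefact (Upow j ++ X) p.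
Proof.
move=> hw hX p /andP [hp1 hp2].
have e4 := divn_eq (p - 2 * j - l0) 4.
have m4 : (p - 2 * j - l0) %% 4 < 4 by apply: ltn_pmod.
have : exists t, [/\ t <= j, 4 * t <= p - 2 * j - l0 & p - 2 * j - l0 - 4 * t <= w].
  case: (leqP j ((p - 2 * j - l0) %/ 4)) => h.
    by exists j; split => //; lia.
  exists ((p - 2 * j - l0) %/ 4); split; try lia.
move=> [t [t1 t2 t3]].
have -> : p = (2 * j + 4 * t) + (l0 + (p - 2 * j - l0 - 4 * t)) by lia.
apply: codefact_cat; first by apply: cf_Upow.
exact: hX.
Qed.

Lemma fam_real j X l0 w v c :
  all (fun c => 0 < c < 32) X -> (j = 0 \/ 3 <= w) -> (forall l, l <= w -> codefact X (l0 + l)) ->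
  odd (count_mem c X) ->
  (forall p, 12 * j + size X <= 6 * p -> 2 * j + l0 <= p) ->
  (forall p, 2 * p < 12 * j + size X -> p <= 6 * j + l0 + w) ->
  @in_system_of_sets_of_lengths G25 (fun k => v + (2 * j + l0) <= k <= v + (6 * j + l0 + w)).
Proof.
move=> hX hw hf oc HL HU.
apply: (@realize (Upow j ++ X)).
- by rewrite all_cat Upow_all hX.
- lia.
- by rewrite size_cat size_Upow.
- by rewrite size_cat size_Upow.
- left; exists c; rewrite count_cat oddD oc; by case: (odd _) (Upow_even j c).
- by move=> p hp; exact: (family hw hf hp).
Qed.

(* X8 odd 1 *)
Definition X8 : seq nat := [:: 1; 2; 4; 4; 6; 7; 12; 14].
Definition X8_0 : seq (seq nat) %N := [:: [:: 1; 2; 4; 7]; [:: 4; 6; 12; 14]].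
Definition X8_1 : seq (seq nat) %N := [:: [:: 1; 6; 7]; [:: 2; 12; 14]; [:: 4; 4]].
(* X12 odd 2 *)
Definition X12 : seq nat := [:: 2; 3; 4; 5; 5; 7; 12; 14; 16; 16; 31; 31].
Definition X12_0 : seq (seq nat) %N := [:: [:: 2; 4; 5; 12; 16; 31]; [:: 3; 5; 7; 14; 16; 31]].
Definition X12_1 : seq (seq nat) %N := [:: [:: 2; 5; 7]; [:: 3; 12; 16; 31]; [:: 4; 5; 14; 16; 31]].
Definition X12_2 : seq (seq nat) %N := [:: [:: 2; 5; 7]; [:: 3; 4; 5; 12; 14]; [:: 16; 16]; [:: 31; 31]].
Definition X12_3 : seq (seq nat) %N := [:: [:: 2; 12; 14]; [:: 3; 4; 7]; [:: 5; 5]; [:: 16; 16]; [:: 31; 31]].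
(* X18 odd 2 *)
Definition X18 : seq nat := [:: 1; 1; 2; 2; 2; 4; 4; 7; 8; 8; 9; 12; 16; 16; 24; 24; 31; 31].
Definition X18_0 : seq (seq nat) %N := [:: [:: 1; 2; 4; 8; 16; 31]; [:: 1; 2; 7; 12; 16; 24]; [:: 2; 4; 8; 9; 24; 31]].
Definition X18_1 : seq (seq nat) %N := [:: [:: 1; 2; 4; 7]; [:: 1; 2; 4; 24; 31]; [:: 2; 8; 9; 12; 16; 31]; [:: 8; 16; 24]].
Definition X18_2 : seq (seq nat) %N := [:: [:: 1; 1]; [:: 2; 2]; [:: 2; 4; 8; 9; 24; 31]; [:: 4; 12; 16; 24]; [:: 7; 8; 16; 31]].
Definition X18_3 : seq (seq nat) %N := [:: [:: 1; 1]; [:: 2; 2]; [:: 2; 4; 7; 8; 9]; [:: 4; 12; 16; 24]; [:: 8; 16; 24]; [:: 31; 31]].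
Definition X18_4 : seq (seq nat) %N := [:: [:: 1; 1]; [:: 2; 2]; [:: 2; 7; 9; 12]; [:: 4; 4]; [:: 8; 16; 24]; [:: 8; 16; 24]; [:: 31; 31]].
Definition X18_5 : seq (seq nat) %N := [:: [:: 1; 1]; [:: 2; 2]; [:: 2; 7; 9; 12]; [:: 4; 4]; [:: 8; 8]; [:: 16; 16]; [:: 24; 24]; [:: 31; 31]].
(* Z10 odd 3 *)
Definition Z10 : seq nat := [:: 1; 1; 3; 4; 7; 7; 9; 12; 12; 14].
Definition Z10_0 : seq (seq nat) %N := [:: [:: 1; 3; 7; 9; 12]; [:: 1; 4; 7; 12; 14]].
Definition Z10_1 : seq (seq nat) %N := [:: [:: 1; 3; 12; 14]; [:: 1; 4; 9; 12]; [:: 7; 7]].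
Definition Z10_2 : seq (seq nat) %N := [:: [:: 1; 1]; [:: 3; 4; 7]; [:: 7; 9; 14]; [:: 12; 12]].
(* Z16 odd 7 *)
Definition Z16 : seq nat := [:: 4; 4; 5; 5; 6; 6; 7; 8; 9; 14; 16; 16; 16; 24; 31; 31].
Definition Z16_0 : seq (seq nat) %N := [:: [:: 4; 5; 9; 16; 24]; [:: 4; 5; 6; 8; 16; 31]; [:: 6; 7; 14; 16; 31]].
Definition Z16_1 : seq (seq nat) %N := [:: [:: 4; 5; 6; 7]; [:: 4; 5; 6; 24; 31]; [:: 8; 9; 14; 16; 31]; [:: 16; 16]].
Definition Z16_2 : seq (seq nat) %N := [:: [:: 4; 4]; [:: 5; 5]; [:: 6; 9; 16; 31]; [:: 6; 14; 16; 24]; [:: 7; 8; 16; 31]].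
Definition Z16_3 : seq (seq nat) %N := [:: [:: 4; 4]; [:: 5; 5]; [:: 6; 6]; [:: 7; 24; 31]; [:: 8; 9; 14; 16; 31]; [:: 16; 16]].
Definition Z16_4 : seq (seq nat) %N := [:: [:: 4; 4]; [:: 5; 5]; [:: 6; 6]; [:: 7; 9; 14]; [:: 8; 16; 24]; [:: 16; 16]; [:: 31; 31]].
(* Z22 odd 1 *)
Definition Z22 : seq nat := [:: 1; 2; 4; 4; 5; 5; 5; 6; 6; 7; 8; 9; 14; 14; 14; 14; 16; 16; 24; 24; 31; 31].
Definition Z22_0 : seq (seq nat) %N := [:: [:: 1; 6; 9; 14]; [:: 2; 5; 6; 14; 16; 31]; [:: 4; 5; 7; 14; 16; 24]; [:: 4; 5; 8; 14; 24; 31]].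
Definition Z22_1 : seq (seq nat) %N := [:: [:: 1; 4; 5]; [:: 2; 5; 9; 14]; [:: 4; 5; 8; 14; 24; 31]; [:: 6; 14; 16; 24]; [:: 6; 7; 14; 16; 31]].
Definition Z22_2 : seq (seq nat) %N := [:: [:: 1; 4; 5]; [:: 2; 5; 7]; [:: 4; 5; 6; 24; 31]; [:: 6; 14; 16; 24]; [:: 8; 9; 14; 16; 31]; [:: 14; 14]].
Definition Z22_3 : seq (seq nat) %N := [:: [:: 1; 4; 5]; [:: 2; 4; 6]; [:: 5; 5]; [:: 6; 14; 16; 24]; [:: 7; 24; 31]; [:: 8; 9; 14; 16; 31]; [:: 14; 14]].
Definition Z22_4 : seq (seq nat) %N := [:: [:: 1; 4; 5]; [:: 2; 4; 6]; [:: 5; 5]; [:: 6; 8; 14]; [:: 7; 24; 31]; [:: 9; 14; 24; 31]; [:: 14; 14]; [:: 16; 16]].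
Definition Z22_5 : seq (seq nat) %N := [:: [:: 1; 4; 5]; [:: 2; 4; 6]; [:: 5; 5]; [:: 6; 8; 14]; [:: 7; 9; 14]; [:: 14; 14]; [:: 16; 16]; [:: 24; 24]; [:: 31; 31]].
Definition Z22_6 : seq (seq nat) %N := [:: [:: 1; 8; 9]; [:: 2; 5; 7]; [:: 4; 4]; [:: 5; 5]; [:: 6; 6]; [:: 14; 14]; [:: 14; 14]; [:: 16; 16]; [:: 24; 24]; [:: 31; 31]].

Lemma cf_X8 l : l <= 1 -> codefact X8 (2 + l).
Proof.
move=> hl.
have h0 : codefact X8 (2+0) by apply: (cfX (F := X8_0)); vm_compute.
have h1 : codefact X8 (2+1) by apply: (cfX (F := X8_1)); vm_compute.
case: l hl => [|[|l]] hl; [exact: h0|exact: h1|by []].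
Qed.
Lemma cf_X12 l : l <= 3 -> codefact X12 (2 + l).
Proof.
move=> hl.
have h0 : codefact X12 (2+0) by apply: (cfX (F := X12_0)); vm_compute.
have h1 : codefact X12 (2+1) by apply: (cfX (F := X12_1)); vm_compute.
have h2 : codefact X12 (2+2) by apply: (cfX (F := X12_2)); vm_compute.
have h3 : codefact X12 (2+3) by apply: (cfX (F := X12_3)); vm_compute.
case: l hl => [|[|[|[|l]]]] hl; [exact: h0|exact: h1|exact: h2|exact: h3|by []].
Qed.
Lemma cf_X18 l : l <= 5 -> codefact X18 (3 + l).
Proof.
move=> hl.
have h0 : codefact X18 (3+0) by apply: (cfX (F := X18_0)); vm_compute.
have h1 : codefact X18 (3+1) by apply: (cfX (F := X18_1)); vm_compute.
have h2 : codefact X18 (3+2) by apply: (cfX (F := X18_2)); vm_compute.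
have h3 : codefact X18 (3+3) by apply: (cfX (F := X18_3)); vm_compute.
have h4 : codefact X18 (3+4) by apply: (cfX (F := X18_4)); vm_compute.
have h5 : codefact X18 (3+5) by apply: (cfX (F := X18_5)); vm_compute.
case: l hl => [|[|[|[|[|[|l]]]]]] hl; [exact: h0|exact: h1|exact: h2|exact: h3|exact: h4|exact: h5|by []].
Qed.
Lemma cf_Z10 l : l <= 2 -> codefact Z10 (2 + l).
Proof.
move=> hl.
have h0 : codefact Z10 (2+0) by apply: (cfX (F := Z10_0)); vm_compute.
have h1 : codefact Z10 (2+1) by apply: (cfX (F := Z10_1)); vm_compute.
have h2 : codefact Z10 (2+2) by apply: (cfX (F := Z10_2)); vm_compute.
case: l hl => [|[|[|l]]] hl; [exact: h0|exact: h1|exact: h2|by []].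
Qed.
Lemma cf_Z16 l : l <= 4 -> codefact Z16 (3 + l).
Proof.
move=> hl.
have h0 : codefact Z16 (3+0) by apply: (cfX (F := Z16_0)); vm_compute.
have h1 : codefact Z16 (3+1) by apply: (cfX (F := Z16_1)); vm_compute.
have h2 : codefact Z16 (3+2) by apply: (cfX (F := Z16_2)); vm_compute.
have h3 : codefact Z16 (3+3) by apply: (cfX (F := Z16_3)); vm_compute.
have h4 : codefact Z16 (3+4) by apply: (cfX (F := Z16_4)); vm_compute.
case: l hl => [|[|[|[|[|l]]]]] hl; [exact: h0|exact: h1|exact: h2|exact: h3|exact: h4|by []].
Qed.
Lemma cf_Z22 l : l <= 6 -> codefact Z22 (4 + l).
Proof.
move=> hl.
have h0 : codefact Z22 (4+0) by apply: (cfX (F := Z22_0)); vm_compute.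
have h1 : codefact Z22 (4+1) by apply: (cfX (F := Z22_1)); vm_compute.
have h2 : codefact Z22 (4+2) by apply: (cfX (F := Z22_2)); vm_compute.
have h3 : codefact Z22 (4+3) by apply: (cfX (F := Z22_3)); vm_compute.
have h4 : codefact Z22 (4+4) by apply: (cfX (F := Z22_4)); vm_compute.
have h5 : codefact Z22 (4+5) by apply: (cfX (F := Z22_5)); vm_compute.
have h6 : codefact Z22 (4+6) by apply: (cfX (F := Z22_6)); vm_compute.
case: l hl => [|[|[|[|[|[|[|l]]]]]]] hl; [exact: h0|exact: h1|exact: h2|exact: h3|exact: h4|exact: h5|exact: h6|by []].
Qed.

Close Scope ring_scope.

Lemma ext_sys (G : finZmodType) (P Q : nat -> Prop) :
  @in_system_of_sets_of_lengths G P -> (forall k, P k <-> Q k) -> @in_system_of_sets_of_lengths G Q.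
Proof.
move=> [B [zB H]] PQ; exists B; split => // k; rewrite -PQ; exact: H.
Qed.

Lemma iv_eq (a b a' b' : nat) : a = a' -> b = b' -> forall k, (a <= k <= b) <-> (a' <= k <= b').
Proof. by move=> -> ->. Qed.

Lemma sys25 a b : 2 <= a -> a < b -> b + 1 <= 3 * a ->
  @in_system_of_sets_of_lengths G25 (fun k => a <= k <= b).
Proof.
move=> a2 ab b3.
have e := divn_eq (b - a) 4.
have m : (b - a) %% 4 < 4 by apply: ltn_pmod.
case Er: ((b - a) %% 4) m => [|[|[|[|r]]]] // _; rewrite Er in e.
- (* d = 4(j+1), Z16 with j *)
  set j := ((b - a) %/ 4).-1.
  have j1 : 0 < (b - a) %/ 4 by lia.
  apply: (ext_sys (@fam_real j Z16 3 4 (a - (2 * j + 3)) 7 _ _ _ _ _ _)).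
  + by [].
  + by right.
  + exact: cf_Z16.
  + by [].
  + move=> p; rewrite /Z16 /=; lia.
  + move=> p; rewrite /Z16 /=; lia.
  + apply: iv_eq; rewrite /j; lia.
- case Ej: ((b - a) %/ 4) e => [|j] e.
  + (* d = 1 : X8 *)
    apply: (ext_sys (@fam_real 0 X8 2 1 (a - 2) 1 _ _ _ _ _ _)).
    * by [].
    * by left.
    * exact: cf_X8.
    * by [].
    * move=> p; rewrite /X8 /=; lia.
    * move=> p; rewrite /X8 /=; lia.
    * apply: iv_eq; lia.
  + (* d = 4j + 5 : X18 *)
    apply: (ext_sys (@fam_real j X18 3 5 (a - (2 * j + 3)) 2 _ _ _ _ _ _)).
    * by [].
    * by right.
    * exact: cf_X18.
    * by [].
    * move=> p; rewrite /X18 /=; lia.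
    * move=> p; rewrite /X18 /=; lia.
    * apply: iv_eq; lia.
- case Ej: ((b - a) %/ 4) e => [|j] e.
  + (* d = 2 : Z10 *)
    apply: (ext_sys (@fam_real 0 Z10 2 2 (a - 2) 3 _ _ _ _ _ _)).
    * by [].
    * by left.
    * exact: cf_Z10.
    * by [].
    * move=> p; rewrite /Z10 /=; lia.
    * move=> p; rewrite /Z10 /=; lia.
    * apply: iv_eq; lia.
  + (* d = 4j + 6 : Z22 *)
    apply: (ext_sys (@fam_real j Z22 4 6 (a - (2 * j + 4)) 1 _ _ _ _ _ _)).
    * by [].
    * by right.
    * exact: cf_Z22.
    * by [].
    * move=> p; rewrite /Z22 /=; lia.
    * move=> p; rewrite /Z22 /=; lia.
    * apply: iv_eq; lia.
- (* d = 4j + 3 : X12 *)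
  set j := (b - a) %/ 4.
  apply: (ext_sys (@fam_real j X12 2 3 (a - (2 * j + 2)) 2 _ _ _ _ _ _)).
  + by [].
  + by right.
  + exact: cf_X12.
  + by [].
  + move=> p; rewrite /X12 /=; lia.
  + move=> p; rewrite /X12 /=; lia.
  + apply: iv_eq; rewrite /j; lia.
Qed.

Lemma sys25_single a : @in_system_of_sets_of_lengths G25 (fun k => a <= k <= a).
Proof.
apply: (ext_sys (@realize [::] a 0 0 _ _ _ _ _ _)).
- by [].
- by [].
- by move=> p.
- by move=> p.
- by right => p /= h; lia.
- move=> p hp; have -> : p = 0 by lia.
  by exists [::].
- by move=> k; rewrite !addn0.
Qed.

Close Scope ring_scope.
Open Scope ring_scope.

Notation G6 := 'Z_6.
Definition z6 (i : nat) : G6 := inZp i.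

Lemma sum6 (R : nmodType) (F : G6 -> R) :
  \sum_(g : G6) F g = F (z6 0) + (F (z6 1) + (F (z6 2) + (F (z6 3) + (F (z6 4) + F (z6 5))))).
Proof.
rewrite !big_ord_recl big_ord0 addr0.
by congr (F _ + (F _ + (F _ + (F _ + (F _ + F _))))); apply/val_inj.
Qed.

Lemma sum6n (F : G6 -> nat) :
  (\sum_(g : G6) F g = F (z6 0) + (F (z6 1) + (F (z6 2) + (F (z6 3) + (F (z6 4) + F (z6 5))))))%N.
Proof.
rewrite !big_ord_recl big_ord0 addn0.
by congr (F _ + (F _ + (F _ + (F _ + (F _ + F _)))))%N; apply/val_inj.
Qed.

Definition tup (A : fseq G6) : seq nat :=
  [:: A (z6 0); A (z6 1); A (z6 2); A (z6 3); A (z6 4); A (z6 5)].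

Definition ffun_of (d : seq nat) : fseq G6 := [ffun g : G6 => nth 0%N d g].

Lemma tup_ffun a b c d e f : tup (ffun_of [:: a; b; c; d; e; f]) = [:: a; b; c; d; e; f].
Proof. by rewrite /tup !ffunE. Qed.

Lemma ffun_tup A : ffun_of (tup A) = A.
Proof.
apply/ffunP => g; rewrite ffunE.
case: g => [[|[|[|[|[|[|i]]]]]] hi] //=; try by congr (A _); apply/val_inj.
Qed.

Lemma tup_inj A B : tup A = tup B -> A = B.
Proof. by move=> e; rewrite -(ffun_tup A) -(ffun_tup B) e. Qed.

Definition zs (c : seq nat) : bool :=
  ((0 * nth 0 c 0 + (1 * nth 0 c 1 + (2 * nth 0 c 2 + (3 * nth 0 c 3 + (4 * nth 0 c 4 + 5 * nth 0 c 5))))) %% 6 == 0)%N.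

Lemma mulrn_z6 (x : G6) n : x *+ n = (x * n)%:R.
Proof. by rewrite -{1}(natr_Zp x) -mulrnA. Qed.

Lemma zero_sum6 A : zero_sum A = zs (tup A).
Proof.
rewrite /zero_sum /sigma (eq_bigr (fun g : G6 => (val g * A g)%:R)); last first.
  by move=> g _; rewrite mulrn_z6.
rewrite -natr_sum sum6n.
set N := (_ + _)%N.
have -> : zs (tup A) = (N %% 6 == 0)%N by [].
apply/eqP/eqP => h.
  have := congr1 (fun x : 'Z_6 => nat_of_ord x) h; rewrite /= val_Zp_nat //.
apply/val_inj; rewrite /=.
have -> : nat_of_ord (N%:R : 'Z_6) = (N %% 6)%N by rewrite val_Zp_nat.
by rewrite h.
Qed.

Lemma len6 A : fseq_len A = sumn (tup A).
Proof. by rewrite /fseq_len sum6n /tup /= addn0. Qed.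

Definition kord : seq nat := [:: 1; 6; 3; 2; 3; 6].

Definition all6 (bnd : seq nat) (P : seq nat -> bool) : bool :=
  all (fun a => all (fun b => all (fun c => all (fun d => all (fun e => all (fun f =>
    P [:: a; b; c; d; e; f]) (iota 0 (nth 0 bnd 5))) (iota 0 (nth 0 bnd 4)))
    (iota 0 (nth 0 bnd 3))) (iota 0 (nth 0 bnd 2))) (iota 0 (nth 0 bnd 1))) (iota 0 (nth 0 bnd 0)).

Lemma all6E bnd P : all6 bnd P -> forall a b c d e f,
  (a < nth 0 bnd 0)%N -> (b < nth 0 bnd 1)%N -> (c < nth 0 bnd 2)%N ->
  (d < nth 0 bnd 3)%N -> (e < nth 0 bnd 4)%N -> (f < nth 0 bnd 5)%N -> P [:: a; b; c; d; e; f].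
Proof.
move=> H a b c d e f ha hb hc hd he hf.
move/allP: H => /(_ a); rewrite mem_iota ha => /(_ isT).
move/allP => /(_ b); rewrite mem_iota hb => /(_ isT).
move/allP => /(_ c); rewrite mem_iota hc => /(_ isT).
move/allP => /(_ d); rewrite mem_iota hd => /(_ isT).
move/allP => /(_ e); rewrite mem_iota he => /(_ isT).
by move/allP => /(_ f); rewrite mem_iota hf => /(_ isT).
Qed.

Lemma all6I bnd (P : seq nat -> bool) : (forall a b c d e f,
  (a < nth 0 bnd 0)%N -> (b < nth 0 bnd 1)%N -> (c < nth 0 bnd 2)%N ->
  (d < nth 0 bnd 3)%N -> (e < nth 0 bnd 4)%N -> (f < nth 0 bnd 5)%N -> P [:: a; b; c; d; e; f]) ->
  all6 bnd P.
Proof.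
move=> H.
apply/allP => a; rewrite mem_iota => /= ha.
apply/allP => b; rewrite mem_iota => /= hb.
apply/allP => c; rewrite mem_iota => /= hc.
apply/allP => d; rewrite mem_iota => /= hd.
apply/allP => e; rewrite mem_iota => /= he.
apply/allP => f; rewrite mem_iota => /= hf.
exact: H.
Qed.

Definition zeros6 : seq nat := [:: 0; 0; 0; 0; 0; 0]%N.

Definition mz (c : seq nat) : bool :=
  [&& zs c, c != zeros6 &
      all6 (map S c) (fun d => (d == zeros6) || (d == c) || ~~ zs d)].

Definition atoms6 : seq (seq nat) :=
[:: [:: 0; 0; 0; 0; 0; 6]; [:: 0; 0; 0; 0; 1; 4]; [:: 0; 0; 0; 0; 2; 2]; [:: 0; 0; 0; 0; 3; 0]; [:: 0; 0; 0; 1; 0; 3]; [:: 0; 0; 0; 1; 1; 1]; [:: 0; 0; 0; 2; 0; 0]; [:: 0; 0; 1; 0; 0; 2]; [:: 0; 0; 1; 0; 1; 0]; [:: 0; 0; 2; 1; 0; 1]; [:: 0; 0; 3; 0; 0; 0]; [:: 0; 1; 0; 0; 0; 1]; [:: 0; 1; 0; 1; 2; 0]; [:: 0; 1; 1; 1; 0; 0]; [:: 0; 2; 0; 0; 1; 0]; [:: 0; 2; 2; 0; 0; 0]; [:: 0; 3; 0; 1; 0; 0]; [:: 0; 4; 1; 0; 0; 0]; [:: 0; 6; 0; 0; 0; 0]; [:: 1; 0; 0; 0; 0; 0]]%N.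

Lemma box_check : all6 kord (fun c => mz c ==> (c \in atoms6)).
Proof. by vm_compute. Qed.

Lemma tup_one : tup (fseq_one G6) = zeros6.
Proof. by rewrite /tup !ffunE. Qed.

Lemma tup_le (A : fseq G6) (d : seq nat) (a b c e f g : nat) :
  d = [:: a; b; c; e; f; g] ->
  (a <= A (z6 0))%N -> (b <= A (z6 1))%N -> (c <= A (z6 2))%N ->
  (e <= A (z6 3))%N -> (f <= A (z6 4))%N -> (g <= A (z6 5))%N ->
  forall x, (ffun_of d x <= A x)%N.
Proof.
move=> -> ha hb hc he hf hg x; rewrite ffunE.
case: x => [[|[|[|[|[|[|i]]]]]] hi] //=.
- by move: ha; congr (_ <= A _)%N; apply/val_inj.
- by move: hb; congr (_ <= A _)%N; apply/val_inj.
- by move: hc; congr (_ <= A _)%N; apply/val_inj.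
- by move: he; congr (_ <= A _)%N; apply/val_inj.
- by move: hf; congr (_ <= A _)%N; apply/val_inj.
- by move: hg; congr (_ <= A _)%N; apply/val_inj.
Qed.

Lemma atom_mz A : atom A -> mz (tup A).
Proof.
move=> aA; have aA' := aA; case: aA' => zA nA _.
apply/and3P; split.
- by rewrite -zero_sum6.
- apply: contra nA => /eqP e; apply/eqP; apply: tup_inj; by rewrite e tup_one.
- apply: all6I => a b c d e f ha hb hc hd he hf.
  case: (boolP (zs [:: a; b; c; d; e; f])) => z; last by rewrite !orbT.
  have le := @tup_le A _ a b c d e f erefl ha hb hc hd he hf.
  have zU : zero_sum (ffun_of [:: a; b; c; d; e; f]) by rewrite zero_sum6 tup_ffun.
  case: (atom_sub aA le zU) => h.
    by rewrite -(tup_ffun a b c d e f) h tup_one eqxx.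
  by rewrite -(tup_ffun a b c d e f) h eqxx orbT.
Qed.

Lemma pow_case A (i k : nat) (c : seq nat) : atom A -> (k <= A (z6 i))%N ->
  tup (ind (nseq k (z6 i))) = c -> zs c -> c != zeros6 -> tup A = c.
Proof.
move=> aA hk hc zc nc.
have le : forall g, (ind (nseq k (z6 i)) g <= A g)%N.
  move=> g; rewrite ffunE count_nseq /=; case: eqP => [<-|_]; by rewrite ?mul1n ?mul0n.
have zU : zero_sum (ind (nseq k (z6 i))) by rewrite zero_sum6 hc.
case: (atom_sub aA le zU) => h.
  by move: nc; rewrite -hc h tup_one eqxx.
by rewrite -h.
Qed.

Lemma classify A : atom A -> tup A \in atoms6.
Proof.
move=> aA.
case: (leqP 1 (A (z6 0))) => h0.
  by rewrite (@pow_case A 0 1 [:: 1; 0; 0; 0; 0; 0]%N) //; rewrite /tup !ffunE.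
case: (leqP 6 (A (z6 1))) => h1.
  by rewrite (@pow_case A 1 6 [:: 0; 6; 0; 0; 0; 0]%N) //; rewrite /tup !ffunE.
case: (leqP 3 (A (z6 2))) => h2.
  by rewrite (@pow_case A 2 3 [:: 0; 0; 3; 0; 0; 0]%N) //; rewrite /tup !ffunE.
case: (leqP 2 (A (z6 3))) => h3.
  by rewrite (@pow_case A 3 2 [:: 0; 0; 0; 2; 0; 0]%N) //; rewrite /tup !ffunE.
case: (leqP 3 (A (z6 4))) => h4.
  by rewrite (@pow_case A 4 3 [:: 0; 0; 0; 0; 3; 0]%N) //; rewrite /tup !ffunE.
case: (leqP 6 (A (z6 5))) => h5.
  by rewrite (@pow_case A 5 6 [:: 0; 0; 0; 0; 0; 6]%N) //; rewrite /tup !ffunE.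
have := all6E box_check h0 h1 h2 h3 h4 h5.
by rewrite -/(tup A) atom_mz.
Qed.

Definition P1 : seq nat := [:: 0; 6; 0; 0; 0; 0]%N.
Definition P5 : seq nat := [:: 0; 0; 0; 0; 0; 6]%N.
Definition P15 : seq nat := [:: 0; 1; 0; 0; 0; 1]%N.

Lemma atoms6_facts : all (fun c => [&& sumn c <= 6,
   (sumn c == 6) ==> ((c == P1) || (c == P5)) &
   [&& nth 0 c 0 == 0, nth 0 c 2 == 0, nth 0 c 3 == 0 & nth 0 c 4 == 0] ==> (c \in [:: P1; P5; P15])])%N atoms6.
Proof. by vm_compute. Qed.

Lemma D6 (A : fseq G6) : atom A -> (fseq_len A <= 6)%N.
Proof.
move/classify => h; rewrite len6.
by have /and3P [] := allP atoms6_facts _ h.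
Qed.

Lemma D6_6 (A : fseq G6) : atom A -> fseq_len A = 6%N -> (tup A == P1) || (tup A == P5).
Proof.
move/classify => h; rewrite len6 => e.
have /and3P [_ /implyP H _] := allP atoms6_facts _ h.
by apply: H; rewrite e.
Qed.

Lemma D6_15 (A : fseq G6) : atom A -> A (z6 0) = 0%N -> A (z6 2) = 0%N -> A (z6 3) = 0%N -> A (z6 4) = 0%N ->
  tup A \in [:: P1; P5; P15].
Proof.
move/classify => h a0 a2 a3 a4.
have /and3P [_ _ /implyP H] := allP atoms6_facts _ h.
by apply: H; rewrite /tup /= a0 a2 a3 a4.
Qed.

Close Scope ring_scope.

Lemma le_prod (G : finZmodType) (s : seq (fseq G)) A g : A \in s -> A g <= fseq_prod s g.
Proof.
elim: s => [|B s IH] //; rewrite in_cons prod_cons mulE => /orP [/eqP ->|As].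
  exact: leq_addr.
by apply: leq_trans (IH As) _; apply: leq_addl.
Qed.

Lemma prod_zero (G : finZmodType) (s : seq (fseq G)) g : (forall A, A \in s -> A g = 0) -> fseq_prod s g = 0.
Proof.
elim: s => [|B s IH] H; first by rewrite prod_nil ffunE.
rewrite prod_cons mulE (H B (mem_head _ _)) IH // => A As; apply: H; by rewrite in_cons As orbT.
Qed.

Lemma size_le_len (G : finZmodType) (s : seq (fseq G)) : (forall A, A \in s -> atom A) ->
  size s <= fseq_len (fseq_prod s).
Proof.
elim: s => [|B s IH] H //; rewrite prod_cons len_mul /=.
have := atom_len_pos (H B (mem_head _ _)).
have := IH (fun A As => H A (ltac:(by rewrite in_cons As orbT))).
lia.
Qed.

Lemma count15 (s : seq (fseq G6)) : (forall A, A \in s -> tup A \in [:: P1; P5; P15]) ->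
  exists t u p, [/\ size s = t + u + p, fseq_prod s (z6 1) = 6 * t + p & fseq_prod s (z6 5) = 6 * u + p].
Proof.
elim: s => [|A s IH] H.
  by exists 0, 0, 0; rewrite prod_nil !ffunE.
have [t [u [p [e1 e2 e3]]]] := IH (fun B Bs => H B (ltac:(by rewrite in_cons Bs orbT))).
rewrite prod_cons !mulE.
have -> : size (A :: s) = (size s).+1 by [].
have hA := H A (mem_head _ _).
have a1 : A (z6 1) = nth 0 (tup A) 1 by [].
have a5 : A (z6 5) = nth 0 (tup A) 5 by [].
move: hA; rewrite !inE => /orP [/eqP e|/orP [/eqP e|/eqP e]].
- have [-> ->] : A (z6 1) = 6 /\ A (z6 5) = 0 by rewrite a1 a5 e.
  by exists t.+1, u, p; split; lia.
- have [-> ->] : A (z6 1) = 0 /\ A (z6 5) = 6 by rewrite a1 a5 e.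
  by exists t, u.+1, p; split; lia.
- have [-> ->] : A (z6 1) = 1 /\ A (z6 5) = 1 by rewrite a1 a5 e.
  by exists t, u, p.+1; split; lia.
Qed.

Lemma z60 : z6 0 = 0%R. Proof. by apply/val_inj. Qed.

Lemma c6_interval (B : fseq G6) a b : in_length_set B a -> in_length_set B b -> in_length_set B b.-1 ->
  a < b -> 2 <= a /\ b + 1 <= 3 * a.
Proof.
move=> [sa [ea aa pa]] [sb [eb ab pb]] [sc [ec ac pc]] lt.
have [pA [NA [e1 e2 /andP [e3 e3'] _ e5]]] := @fact_bound G6 sa D6 aa.
have [pB [NB [f1 f2 /andP [f3 f3'] _ _]]] := @fact_bound G6 sb D6 ab.
rewrite pa in e1 e2; rewrite pb in f1 f2.
rewrite ea in e1; rewrite eb in f1.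
have NAB : NA = NB by lia.
have a2 : 2 <= a.
  case: (ltnP 1 a) => // a1.
  have a1' : a = 1 by lia.
  exfalso; rewrite a1' in ea lt.
  case: sa ea aa pa {e1 e5} => [|A [|]] //= _ aa pa.
  have aA := aa A (mem_head _ _).
  rewrite prod_cons prod_nil mulf1 in pa; rewrite -pa in pb.
  case: sb eb ab pb {f1 f2 f3 f3'} => [|A1 rest] /= eb ab pb; first by move: lt; rewrite -eb.
  have aA1 := ab A1 (mem_head _ _).
  have arest : forall C, C \in rest -> atom C by move=> C Cr; apply: ab; rewrite in_cons Cr orbT.
  case: aA => _ _ min.
  have zr : zero_sum (fseq_prod rest) by apply: sigma_prod => C /arest [].
  case: aA1 => z1 n1 _.
  case: (min A1 (fseq_prod rest) z1 zr); first by rewrite -pb prod_cons.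
    by move=> e; rewrite e eqxx in n1.
  move=> e; have := size_le_len arest; rewrite e len_one.
  by move=> h0; lia.
split => //.
rewrite leqNgt; apply/negP => h.
have B00 : B 0%R = 0 by lia.
have N6 : (6 * pA) = NA by lia.
have h6 := e5 N6.
have aP : forall A, A \in sa -> (tup A == P1) || (tup A == P5).
  move=> A As; case: (h6 A As) => [eA|l6]; last exact: D6_6 (aa A As) l6.
  exfalso; have := le_prod 0%R As; by rewrite pa B00 eA ffunE /=.
have Bz : forall j, j \in [:: 0; 2; 3; 4] -> B (z6 j) = 0.
  move=> j hj; rewrite -pa; apply: prod_zero => A As.
  have hA : nth 0 (tup A) j = 0.
    by have /orP [/eqP e|/eqP e] := aP A As; rewrite e; move: hj; rewrite !inE => /or4P [] /eqP ->.
  by move: hj hA; rewrite !inE => /or4P [] /eqP -> hh; exact: hh.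
have in15 : forall s, (forall A, A \in s -> atom A) -> fseq_prod s = B ->
    forall A, A \in s -> tup A \in [:: P1; P5; P15].
  move=> s sa' ps A As.
  have le0 : forall j, j \in [:: 0; 2; 3; 4] -> A (z6 j) = 0.
    by move=> j hj; have := le_prod (z6 j) As; rewrite ps (Bz j hj) leqn0 => /eqP.
  by apply: D6_15 (sa' A As) (le0 0 _) (le0 2 _) (le0 3 _) (le0 4 _).
have [t [u [p [g1 g2 g3]]]] := count15 (in15 _ ab pb).
have [t' [u' [p' [k1 k2 k3]]]] := count15 (in15 _ ac pc).
rewrite pb in g2 g3; rewrite pc in k2 k3.
lia.
Qed.

Unset Implicit Arguments.
Close Scope ring_scope.
Theorem proposition3p3 :
  forall (L : nat -> Prop),
    @in_system_of_sets_of_lengths 'Z_6 L ->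
    (exists a b : nat, (a <= b)%N /\ forall k, L k <-> (a <= k <= b)%N) ->
    @in_system_of_sets_of_lengths 'rV['Z_2]_5 L.
Proof.
move=> L [B [zB HL]] [a [b [ab Hab]]].
apply: (@ext_sys _ (fun k => a <= k <= b)); last by move=> k; rewrite Hab.
case: (ltnP a b) => [lt|ge].
  have ina : in_length_set B a by apply/HL/Hab; rewrite leqnn ab.
  have inb : in_length_set B b by apply/HL/Hab; rewrite leqnn ab.
  have inc : in_length_set B b.-1 by apply/HL/Hab; apply/andP; split; lia.
  have [a2 b3] := c6_interval ina inb inc lt.
  exact: sys25 a2 lt b3.
have -> : b = a by lia.
exact: sys25_single.
Qed.
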